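(* Let $i\in\{1,2\}$, let $T\ge 1$, $\mathbb{T}=\{0,1,\dots,T-1\}$, and consider the linear time-varying system $\Sigma_{i,\mathbb{T}}$: $x_i(t+1)=A_i(t)x_i(t)+B_i(t)u_i(t)$, $y_i(t)=C_i(t)x_i(t)+D_i(t)u_i(t)$, $t\in\mathbb{T}$, with $u_i(t)\in\mathbb{R}^{n_u}$, $y_i(t)\in\mathbb{R}^{n_y}$, and fixed initial state $x_i(0)=x_{i0}$. Let $\mathcal{B}_{i,x_{i0}}\subseteq\mathbb{R}^{n_wT}$ ($n_w=n_u+n_y$) be its admissible behavior (defined in the context). Then $\mathcal{B}_{i,x_{i0}}$ is an affine set. Moreover, suppose $n_uT+1$ test inputs $\mathbf{u}_i^0,\mathbf{u}_i^1,\dots,\mathbf{u}_i^{n_uT}\in\mathbb{R}^{n_uT}$ are applied, each from the initial state $x_{i0}$, producing outputs $\mathbf{y}_i^k$, and that (1) $\mathbf{u}_i^0=0\in\mathbb{R}^{n_uT}$ and (2) $\operatorname{rank}[\mathbf{u}_i^1,\dots,\mathbf{u}_i^{n_uT}]=n_uT$. Set $w_i^k=\operatorname{col}(\mathbf{u}_i^k,\mathbf{y}_i^k)$ and $W_i=[w_i^1-w_i^0,\,w_i^2-w_i^0,\dots,w_i^{n_uT}-w_i^0]$. Then a vector $\overline{w}=\operatorname{col}(\overline{\mathbf{u}}_i,\overline{\mathbf{y}}_i)\in\mathbb{R}^{n_wT}$ belongs to $\mathcal{B}_{i,x_{i0}}$ if and only if there exists $g_i\in\mathbb{R}^{n_uT}$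 with $\overline{w}=W_ig_i+w_i^0$.
   Context: The state $x_i(t)$ has some finite (unknown) dimension and $A_i(t),B_i(t),C_i(t),D_i(t)$ are real matrices of compatible sizes. For a sequence over $\mathbb{T}$, supervectors are $\mathbf{u}_i=[u_i(0)^{\rm T},\dots,u_i(T-1)^{\rm T}]^{\rm T}\in\mathbb{R}^{n_uT}$, $\mathbf{y}_i=[y_i(0)^{\rm T},\dots,y_i(T-1)^{\rm T}]^{\rm T}\in\mathbb{R}^{n_yT}$, and similarly $\mathbf{x}_i$. The admissible behavior $\mathcal{B}_{i,x_{i0}}$ is the set of all $\operatorname{col}(\mathbf{u}_i,\mathbf{y}_i)\in\mathbb{R}^{n_wT}$ for which there exists a state supervector $\mathbf{x}_i$ with $x_i(0)=x_{i0}$ such that $(\mathbf{u}_i,\mathbf{y}_i,\mathbf{x}_i)$ satisfies the system equations for all $t\in\mathbb{T}$. The output $\mathbf{y}_i^k$ is the output supervector of the system driven by input $\mathbf{u}_i^k$ from $x_i(0)=x_{i0}$. *)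

(* Defs.v *)
From HB Require Import structures.
From mathcomp Require Import all_boot all_order all_algebra.
From mathcomp Require Import reals.
Set Implicit Arguments. Unset Strict Implicit. Unset Printing Implicit Defensive.
Import Order.TTheory GRing.Theory Num.Theory.
Local Open Scope ring_scope.

Section LTV.
Variable R : realType.

(* Supervector [s(0); s(1); ...; s(T-1)] of a signal s : nat -> 'cV_n;
   entry t*n + j is (s t) j. *)
Definition supvec (n T : nat) (s : nat -> 'cV[R]_n) : 'cV[R]_(T * n) :=
  (mxvec (\matrix_(t < T, j < n) s t j 0))^T.

Definition sig_of (n T : nat) (v : 'cV[R]_(T * n)) (t : nat) : 'cV[R]_n :=
  match (insub t : option 'I_T) with
  | Some i => \col_(j < n) v (mxvec_index i j) 0
  | None => 0
  end.

Variables (nx nu ny : nat) (T : nat).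
Variables (A : nat -> 'M[R]_nx) (B : nat -> 'M[R]_(nx, nu))
          (C : nat -> 'M[R]_(ny, nx)) (D : nat -> 'M[R]_(ny, nu)).
Variable x0 : 'cV[R]_nx.

Definition behavior (w : 'cV[R]_(T * nu + T * ny)) : Prop :=
  exists (u : nat -> 'cV[R]_nu) (y : nat -> 'cV[R]_ny) (x : nat -> 'cV[R]_nx),
    x 0%N = x0 /\
    (forall t, (t < T)%N ->
       x t.+1 = A t *m x t + B t *m u t /\ y t = C t *m x t + D t *m u t) /\
    w = col_mx (supvec T u) (supvec T y).

Fixpoint state_traj (u : nat -> 'cV[R]_nu) (t : nat) : 'cV[R]_nx :=
  match t with
  | 0 => x0
  | t'.+1 => A t' *m state_traj u t' + B t' *m u t'
  end.

Definition output (uu : 'cV[R]_(T * nu)) : 'cV[R]_(T * ny) :=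
  let u := sig_of uu in
  supvec T (fun t => C t *m state_traj u t + D t *m u t).

End LTV.

Definition affine_set (R : realType) (m : nat) (S : 'cV[R]_m -> Prop) : Prop :=
  forall (w1 w2 : 'cV[R]_m) (a : R), S w1 -> S w2 -> S (a *: w1 + (1 - a) *: w2).
Arguments behavior {R nx nu ny} T A B C D x0 w.
Arguments output {R nx nu ny} T A B C D x0 uu.

(* Main.v *)
Require Import Defs.
From HB Require Import structures.
From mathcomp Require Import all_boot all_order all_algebra.
From mathcomp Require Import reals.
Import Order.TTheory GRing.Theory Num.Theory.
Local Open Scope ring_scope.

Section Aux.
Variable R : realType.

Lemma supvecE (n T : nat) (s : nat -> 'cV[R]_n) (i : 'I_T) (j : 'I_n) :
  supvec T s (mxvec_index i j) 0 = s i j 0.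
Proof. by rewrite /supvec mxE mxvecE mxE. Qed.

Lemma supvec_eq (n T : nat) (f g : nat -> 'cV[R]_n) :
  (forall t, (t < T)%N -> f t = g t) -> supvec T f = supvec T g.
Proof.
move=> H; apply/matrixP => k z; rewrite (ord1 z).
by case/mxvec_indexP: k => i j; rewrite !supvecE H.
Qed.

Lemma sig_ofE (n T : nat) (v : 'cV[R]_(T * n)) (i : 'I_T) :
  sig_of v i = \col_(j < n) v (mxvec_index i j) 0.
Proof. by rewrite /sig_of valK. Qed.

Lemma sig_of_out (n T : nat) (v : 'cV[R]_(T * n)) t :
  (T <= t)%N -> sig_of v t = 0.
Proof. by move=> h; rewrite /sig_of insubN // -leqNgt. Qed.

Lemma sig_of_supvec (n T : nat) (s : nat -> 'cV[R]_n) t :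
  (t < T)%N -> sig_of (supvec T s) t = s t.
Proof.
move=> ht; have -> : t = Ordinal ht by [].
rewrite sig_ofE; apply/colP => j; by rewrite mxE supvecE.
Qed.

Lemma sig_of0 (n T : nat) t : sig_of (0 : 'cV[R]_(T * n)) t = 0.
Proof.
case: (ltnP t T) => ht; last by rewrite !sig_of_out.
have -> : t = Ordinal ht by [].
by rewrite !sig_ofE; apply/colP => j; rewrite !mxE.
Qed.

Lemma supvec_sig_of (n T : nat) (v : 'cV[R]_(T * n)) :
  supvec T (sig_of v) = v.
Proof.
apply/matrixP => k z; rewrite (ord1 z).
by case/mxvec_indexP: k => i j; rewrite supvecE sig_ofE mxE.
Qed.

Lemma sig_of_lin (n T : nat) (a : R) (v v' : 'cV[R]_(T * n)) t :
  sig_of (a *: v + v') t = a *: sig_of v t + sig_of v' t.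
Proof.
case: (ltnP t T) => ht; last by rewrite !sig_of_out // scaler0 addr0.
have -> : t = Ordinal ht by [].
by rewrite !sig_ofE; apply/colP => j; rewrite !mxE.
Qed.

Lemma supvec_lin (n T : nat) (a : R) (f g : nat -> 'cV[R]_n) :
  supvec T (fun t => a *: f t + g t) = a *: supvec T f + supvec T g.
Proof.
apply/matrixP => k z; rewrite (ord1 z).
by case/mxvec_indexP: k => i j; rewrite !mxE !mxvecE !mxE.
Qed.

Variables (nx nu ny : nat).
Variables (A : nat -> 'M[R]_nx) (B : nat -> 'M[R]_(nx, nu))
          (C : nat -> 'M[R]_(ny, nx)) (D : nat -> 'M[R]_(ny, nu)).

Lemma st_dep (x0 : 'cV[R]_nx) u u' t :
  (forall s, (s < t)%N -> u s = u' s) -> state_traj A B x0 u t = state_traj A B x0 u' t.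
Proof.
elim: t => [//|t IH] H /=.
rewrite IH ?H //; move=> s hs; apply: H; exact: ltnW.
Qed.

Lemma st_split (x0 : 'cV[R]_nx) u t :
  state_traj A B x0 u t = state_traj A B x0 (fun _ => 0) t + state_traj A B 0 u t.
Proof.
elim: t => [|t IH] /=; first by rewrite addr0.
by rewrite IH mulmx0 addr0 mulmxDr addrA.
Qed.

Lemma st_lin a u v t :
  state_traj A B 0 (fun s => a *: u s + v s) t =
  a *: state_traj A B 0 u t + state_traj A B 0 v t.
Proof.
elim: t => [|t IH] /=; first by rewrite scaler0 addr0.
rewrite IH mulmxDr mulmxDr !scalerDr -!scalemxAr.
set p := _ *: (_ *m _); set q := _ *: (_ *m _).
by rewrite -!addrA; congr (_ + _); rewrite addrCA.
Qed.

Variable T : nat.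

Definition lin (uu : 'cV[R]_(T * nu)) : 'cV[R]_(T * ny) :=
  supvec T (fun t => C t *m state_traj A B 0 (sig_of uu) t + D t *m sig_of uu t).

Lemma output_split x0 uu : output T A B C D x0 uu = output T A B C D x0 0 + lin uu.
Proof.
rewrite /output /lin.
have -> : supvec T (fun t => C t *m state_traj A B x0 (sig_of uu) t + D t *m sig_of uu t)
  = supvec T (fun t => 1 *: (C t *m state_traj A B x0 (fun _ => 0) t)
      + (C t *m state_traj A B 0 (sig_of uu) t + D t *m sig_of uu t)).
  apply: supvec_eq => t _; by rewrite scale1r st_split mulmxDr addrA.
rewrite supvec_lin scale1r; congr (_ + _); apply: supvec_eq => t ht.
rewrite sig_of0 mulmx0 addr0; congr (_ *m _).
by apply: st_dep => s _; rewrite sig_of0.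
Qed.

Lemma lin_lin a v v' : lin (a *: v + v') = a *: lin v + lin v'.
Proof.
rewrite /lin -supvec_lin; apply: supvec_eq => t _.
rewrite (st_dep _ _ (fun s => a *: sig_of v s + sig_of v' s)); last first.
  by move=> s _; rewrite sig_of_lin.
rewrite st_lin sig_of_lin !mulmxDr -!scalemxAr scalerDr.
by rewrite -!addrA; congr (_ + _); rewrite addrCA.
Qed.

Lemma lin0 : lin 0 = 0.
Proof.
have h := lin_lin 1 0 0; rewrite !scale1r !addr0 in h.
by apply: (@addrI _ (lin 0)); rewrite addr0 -h.
Qed.

Lemma linD v v' : lin (v + v') = lin v + lin v'.
Proof. by rewrite -[v in LHS]scale1r lin_lin scale1r. Qed.

Lemma linZ a v : lin (a *: v) = a *: lin v.
Proof. by rewrite -[_ *: v]addr0 lin_lin lin0 addr0. Qed.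

Lemma mulmx_sumcol m p (X : 'M[R]_(m, p)) (g : 'cV[R]_p) :
  X *m g = \sum_(k < p) g k 0 *: col k X.
Proof.
apply/matrixP => i j; rewrite (ord1 j) !mxE summxE; apply: eq_bigr => k _.
by rewrite !mxE mulrC.
Qed.

Lemma lin_mul p (X : 'M[R]_(T * nu, p)) (g : 'cV[R]_p) :
  lin (X *m g) = (\matrix_(i, k) lin (col k X) i 0) *m g.
Proof.
rewrite !mulmx_sumcol (big_morph lin linD lin0); apply: eq_bigr => k _.
rewrite linZ; congr (_ *: _); apply/colP => i; by rewrite !mxE.
Qed.

Lemma behaviorP x0 w :
  behavior T A B C D x0 w <-> exists uu, w = col_mx uu (output T A B C D x0 uu).
Proof.
split.
  move=> [u [y [x [hx0 [hs ->]]]]]; exists (supvec T u); congr col_mx.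
  rewrite /output; apply: supvec_eq => t ht; rewrite sig_of_supvec //.
  have hxt : forall s, (s <= T)%N -> x s = state_traj A B x0 (sig_of (supvec T u)) s.
    elim=> [//|s IH] hs1 /=; rewrite sig_of_supvec // -IH ?(ltnW hs1) //.
    by case: (hs s hs1).
  by rewrite -hxt ?(ltnW ht) //; case: (hs t ht).
move=> [uu ->]; exists (sig_of uu),
  (fun t => C t *m state_traj A B x0 (sig_of uu) t + D t *m sig_of uu t),
  (state_traj A B x0 (sig_of uu)).
by split => //; split => //; rewrite supvec_sig_of.
Qed.
Lemma out_sub x0 uu : output T A B C D x0 uu - output T A B C D x0 0 = lin uu.
Proof. by rewrite (output_split x0 uu) addrC addKr. Qed.
End Aux.

Theorem lemma1 (R : realType) (nx nu ny T : nat) (hT : (1 <= T)%N)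
  (A : nat -> 'M[R]_nx) (B : nat -> 'M[R]_(nx, nu))
  (C : nat -> 'M[R]_(ny, nx)) (D : nat -> 'M[R]_(ny, nu))
  (x0 : 'cV[R]_nx) :
  affine_set (behavior T A B C D x0) /\
  forall (us : nat -> 'cV[R]_(T * nu)),
    us 0%N = 0 ->
    \rank (\matrix_(i < T * nu, k < T * nu) us k.+1 i 0) = (T * nu)%N ->
    let w := fun k => col_mx (us k) (output T A B C D x0 (us k)) in
    let W := \matrix_(i < T * nu + T * ny, k < T * nu) (w k.+1 - w 0%N) i 0 in
    forall wbar : 'cV[R]_(T * nu + T * ny),
      behavior T A B C D x0 wbar <-> exists g : 'cV[R]_(T * nu), wbar = W *m g + w 0%N.
Proof.
have OS := @output_split _ _ _ _ A B C D T x0.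
split.
  move=> w1 w2 a /behaviorP [u1 ->] /behaviorP [u2 ->]; apply/behaviorP.
  exists (a *: u1 + (1 - a) *: u2); rewrite !scale_col_mx add_col_mx; congr col_mx.
  rewrite (OS u1) (OS u2) (OS (a *: u1 + (1 - a) *: u2)) linD !linZ.
  rewrite !scalerDr addrACA -scalerDl (_ : a + (1 - a) = 1) ?scale1r //.
  by rewrite addrC subrK.
move=> us hus0 hrank w W wbar.
set U := \matrix_(i < T * nu, k < T * nu) us k.+1 i 0.
have hcol : forall k, col k U = us k.+1 by move=> k; apply/colP => i; rewrite !mxE.
have hW : W = col_mx U (\matrix_(i, k) lin R nx nu ny A B C D T (col k U) i 0).
  apply/matrixP => i k; rewrite /W mxE /w hus0 opp_col_mx add_col_mx subr0 out_sub.
  by rewrite -[i]splitK; case: (split i) => j /=; rewrite ?col_mxEu ?col_mxEd [RHS]mxE ?hcol.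
have hw0 : w 0%N = col_mx 0 (output T A B C D x0 0) by rewrite /w hus0.
have key : forall g, W *m g + w 0%N = col_mx (U *m g) (output T A B C D x0 (U *m g)).
  by move=> g; rewrite hW hw0 mul_col_mx add_col_mx addr0 -lin_mul (OS (U *m g)) addrC.
rewrite behaviorP; split.
  move=> [uu ->].
  have hU : U \in unitmx by rewrite -row_free_unit /row_free hrank.
  by exists (invmx U *m uu); rewrite key mulmxA mulmxV // mul1mx.
by move=> [g ->]; exists (U *m g); rewrite key.
Qed.
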